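(* Let $R$ be a commutative ring and $\underline a=a_1,\dots,a_r$ an $R$-regular sequence. Suppose $B$ and $B'$ are matrices with $r$ rows and entries in $R$ such that $(\underline a\cdot B)=(\underline a\cdot B')$. Then $(\underline a\cdot B)+I_r(B)=(\underline a\cdot B')+I_r(B')$.
   Context: $(\underline a\cdot B)$ is the ideal generated by the entries of $[a_1\cdots a_r]\cdot B$; $I_r(B)$ is the ideal of $r\times r$ minors of $B$. *)

(* Defs.v *)
From HB Require Import structures.
From mathcomp Require Import all_boot all_order all_algebra.
Set Implicit Arguments. Unset Strict Implicit. Unset Printing Implicit Defensive.
Import GRing.Theory.
Local Open Scope ring_scope.

Definition gen_ideal (R : comRingType) (S : R -> Prop) (x : R) : Prop :=
  exists (k : nat) (c g : 'I_k -> R),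
    (forall i, S (g i)) /\ x = \sum_(i < k) c i * g i.

(* union of generating sets (ideal sum = ideal generated by the union) *)
Definition gens_union (R : Type) (S T : R -> Prop) (y : R) : Prop := S y \/ T y.

(* generators of (a_1,...,a_i) : the first i entries of a *)
Definition prefix_gens (R : comRingType) (r : nat) (a : 'rV[R]_r) (i : nat)
  (y : R) : Prop := exists j : 'I_r, (j < i)%N /\ y = a 0 j.

Definition regular_seq (R : comRingType) (r : nat) (a : 'rV[R]_r) : Prop :=
  (forall (i : 'I_r) (x : R),
      gen_ideal (prefix_gens a i) (a 0 i * x) -> gen_ideal (prefix_gens a i) x)
  /\ ~ gen_ideal (prefix_gens a r) 1.

(* generators of (a . B): the entries of the row [a_1 ... a_r] * B *)
Definition aB_gens (R : comRingType) (r n : nat) (a : 'rV[R]_r)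
  (B : 'M[R]_(r, n)) (y : R) : Prop := exists j : 'I_n, y = (a *m B) 0 j.

(* generators of I_r(B): the r x r minors of B *)
Definition minor_gens (R : comRingType) (r n : nat) (B : 'M[R]_(r, n))
  (y : R) : Prop :=
  exists f : 'I_r -> 'I_n,
    (forall i j : 'I_r, (i < j)%N -> (f i < f j)%N) /\ y = \det (colsub f B).

(* Main.v *)
Require Import Defs.
From HB Require Import structures.
From mathcomp Require Import all_boot all_order all_algebra fingroup perm.
Set Implicit Arguments. Unset Strict Implicit. Unset Printing Implicit Defensive.
Import GRing.Theory.
Local Open Scope ring_scope.

Section Ideal.
Variable R : comRingType.
Implicit Types S T : R -> Prop.

Lemma gi0 S : gen_ideal S 0.
Proof.
exists 0%N, (fun _ => 0), (fun _ => 0); split; first by case.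
by rewrite big_ord0.
Qed.

Lemma giG S y : S y -> gen_ideal S y.
Proof.
move=> Sy; exists 1%N, (fun _ => 1), (fun _ => y); split=> //.
by rewrite big_ord1 mul1r.
Qed.

Lemma giM S y x : gen_ideal S x -> gen_ideal S (y * x).
Proof.
case=> k [c [g [Sg ->]]]; exists k, (fun i => y * c i), g; split=> //.
by rewrite mulr_sumr; apply: eq_bigr => i _; rewrite mulrA.
Qed.

Lemma giD S x y : gen_ideal S x -> gen_ideal S y -> gen_ideal S (x + y).
Proof.
case=> k1 [c1 [g1 [S1 ->]]]; case=> k2 [c2 [g2 [S2 ->]]].
exists (k1 + k2)%N,
  (fun i => match split i with inl j => c1 j | inr j => c2 j end),
  (fun i => match split i with inl j => g1 j | inr j => g2 j end).
split; first by move=> i; case: (split i).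
rewrite big_split_ord /=; congr (_ + _); apply: eq_bigr => j _.
  by rewrite (unsplitK (inl _ : 'I_k1 + 'I_k2)).
by rewrite (unsplitK (inr _ : 'I_k1 + 'I_k2)).
Qed.

Lemma giN S x : gen_ideal S x -> gen_ideal S (- x).
Proof. by move=> h; rewrite -mulN1r; apply: giM. Qed.

Lemma giB S x y : gen_ideal S x -> gen_ideal S y -> gen_ideal S (x - y).
Proof. by move=> hx hy; apply: giD => //; apply: giN. Qed.

Lemma gi_sum S (I : finType) (F : I -> R) :
  (forall i, gen_ideal S (F i)) -> gen_ideal S (\sum_i F i).
Proof.
move=> h; apply: (big_ind (gen_ideal S)) => //; [exact: gi0 | exact: giD].
Qed.

Lemma gi_mono S T x : (forall y, S y -> gen_ideal T y) ->
  gen_ideal S x -> gen_ideal T x.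
Proof.
move=> h [k [c [g [Sg ->]]]]; apply: gi_sum => i; apply: giM; exact: h.
Qed.

End Ideal.

Lemma gi_sumP (R : comRingType) (S : R -> Prop) (I : finType) (P : pred I) (F : I -> R) :
  (forall i, P i -> gen_ideal S (F i)) -> gen_ideal S (\sum_(i | P i) F i).
Proof.
move=> h; apply: (big_ind (gen_ideal S)) => //; [exact: gi0 | exact: giD].
Qed.

Lemma minor_any (R : comRingType) (r m : nat) (B : 'M[R]_(r, m)) (g : 'I_r -> 'I_m) :
  gen_ideal (minor_gens B) (\det (colsub g B)).
Proof.
have [/existsP[i /existsP[j /andP[nij /eqP gij]]] | noninj] :=
  boolP [exists i, exists j, (i != j) && (g i == g j)].
  rewrite -det_tr (determinant_alternate nij); first exact: gi0.
  by move=> k; rewrite !mxE gij.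
have ginj : injective g.
  move=> i j gij; apply/eqP; apply: contraNT noninj => nij.
  by apply/existsP; exists i; apply/existsP; exists j; rewrite nij gij eqxx.
pose A := [set g i | i in 'I_r].
pose e := enum A.
have se : size e = r by rewrite -cardE card_imset // card_ord.
have ltr (j : 'I_r) : (index (g j) e < r)%N.
  by rewrite -se index_mem mem_enum; apply: imset_f.
pose sg (j : 'I_r) : 'I_r := Ordinal (ltr j).
have sginj : injective sg.
  move=> i j /(congr1 val) /= hij; apply: ginj.
  have := congr1 (nth (g i) e) hij.
  by rewrite !nth_index // mem_enum; apply: imset_f.
pose s := perm sginj.
pose f (i : 'I_r) := nth (g i) e i.
have fs j : f (s j) = g j.
  rewrite /f permE /= (set_nth_default (g j)) ?se // nth_index // mem_enum.
  exact: imset_f.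
have sorted_e : sorted ltn (map val e).
  rewrite sorted_map /e /enum_mem -enumT; apply: sorted_filter.
    by move=> x y z; apply: ltn_trans.
  by rewrite -sorted_map val_enum_ord iota_ltn_sorted.
have finc : forall i j : 'I_r, (i < j)%N -> (f i < f j)%N.
  move=> i j lij; rewrite /f (set_nth_default (g j) (g i)) ?se //.
  have := sorted_ltn_nth ltn_trans 0%N sorted_e.
  move=> /(_ i j); rewrite !inE size_map se !ltn_ord => /(_ isT isT lij).
  by rewrite !(nth_map (g j)) ?se.
have -> : colsub g B = col_perm s (colsub f B).
  by apply/matrixP => i j; rewrite !mxE fs.
rewrite col_permE det_mulmx det_perm odd_permV mulrC; apply: giM; apply: giG.
by exists f; split.
Qed.

Section Cof.
Variables (R : comRingType) (r : nat).

Definition setcol (M : 'M[R]_r) (k : 'I_r) (u : 'I_r -> R) : 'M[R]_r :=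
  \matrix_(i, j) if j == k then u i else M i j.

Lemma cof_setcol M k u i : cofactor (setcol M k u) i k = cofactor M i k.
Proof.
rewrite /cofactor; congr (_ * \det _); apply/matrixP => p q.
by rewrite !mxE eq_sym (negbTE (neq_lift _ _)).
Qed.

Lemma det_setcol M k u : \det (setcol M k u) = \sum_i u i * cofactor M i k.
Proof.
rewrite (expand_det_col _ k); apply: eq_bigr => i _.
by rewrite cof_setcol mxE eqxx.
Qed.

Lemma setcol_id M k : setcol M k (fun i => M i k) = M.
Proof. by apply/matrixP => i j; rewrite mxE; case: eqP => // ->. Qed.

Lemma sum_delta (F : 'I_r -> R) j : \sum_i F i * (i == j)%:R = F j.
Proof.
rewrite (bigD1 j) //= eqxx mulr1 big1 ?addr0 // => i /negbTE ->.
by rewrite mulr0.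
Qed.

Definition kos (a : 'rV[R]_r) (j l : 'I_r) (i : 'I_r) : R :=
  a 0 l * (i == j)%:R - a 0 j * (i == l)%:R.

Lemma kos_syz (a : 'rV[R]_r) (j l : 'I_r) : \sum_i a 0 i * kos a j l i = 0.
Proof.
rewrite /kos; under eq_bigr do rewrite mulrBr !mulrA.
by rewrite sumrB !sum_delta mulrC subrr.
Qed.

Lemma det_kos (a : 'rV[R]_r) M k j l :
  gen_ideal (fun y => exists c, c != k /\ y = (a *m M) 0 c)
    (\sum_i kos a j l i * cofactor M i k).
Proof.
have -> : \sum_i kos a j l i * cofactor M i k =
    a 0 l * cofactor M j k - a 0 j * cofactor M l k.
  rewrite /kos; under eq_bigr do rewrite mulrBl -!mulrA ![(_%:R * _)]mulrC.
  by rewrite sumrB -!mulr_sumr !sum_delta.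
pose M0 := setcol M k (fun i => (i == j)%:R).
have H := congr1 (fun X => (a *m X) 0 l) (mul_mx_adj M0).
move: H => /=; rewrite mulmxA mul_mx_scalar mxE. rewrite [in RHS]mxE.
rewrite (bigD1 k) //= mxE.
have -> : \sum_i a 0 i * M0 i k = a 0 j.
  by under eq_bigr do rewrite mxE eqxx; rewrite sum_delta.
rewrite mxE cof_setcol det_setcol.
have -> : \sum_i (i == j)%:R * cofactor M i k = cofactor M j k.
  by under eq_bigr do rewrite mulrC; rewrite sum_delta.
move=> H; rewrite mulrC -H addrC addrK.
apply: gi_sumP => c ck.
rewrite mulrC; apply: giM; apply: giG; exists c; split => //.
rewrite !mxE; apply: eq_bigr => i _; rewrite mxE (negbTE ck) //.
Qed.
End Cof.

Section Kos.
Variables (R : comRingType) (r : nat) (a : 'rV[R]_r).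

Definition KS (s : 'I_r -> R) := exists d : 'I_r -> 'I_r -> R,
  forall t, s t = \sum_j \sum_l d j l * kos a j l t.

Lemma KS_ext s1 s2 : (forall t, s1 t = s2 t) -> KS s2 -> KS s1.
Proof. by move=> e [d hd]; exists d => t; rewrite e hd. Qed.

Lemma KS0 : KS (fun _ => 0).
Proof.
exists (fun _ _ => 0) => t; symmetry; apply: big1 => j _; apply: big1 => l _.
by rewrite mul0r.
Qed.

Lemma KSD s1 s2 : KS s1 -> KS s2 -> KS (fun t => s1 t + s2 t).
Proof.
move=> [d1 h1] [d2 h2]; exists (fun j l => d1 j l + d2 j l) => t.
rewrite h1 h2 -big_split; apply: eq_bigr => j _ /=.
by rewrite -big_split; apply: eq_bigr => l _; rewrite mulrDl.
Qed.

Lemma KSZ c s : KS s -> KS (fun t => c * s t).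
Proof.
move=> [d h]; exists (fun j l => c * d j l) => t.
rewrite h mulr_sumr; apply: eq_bigr => j _.
by rewrite mulr_sumr; apply: eq_bigr => l _; rewrite mulrA.
Qed.

Lemma KS_kos j l : KS (kos a j l).
Proof.
exists (fun j' l' => (j' == j)%:R * (l' == l)%:R) => t.
rewrite (bigD1 j) //= [X in _ + X]big1 ?addr0; last first.
  move=> j' nj; rewrite (negbTE nj); apply: big1 => l' _.
  by rewrite !mul0r.
rewrite (bigD1 l) //= [X in _ + X]big1 ?addr0; last first.
  by move=> l' nl; rewrite (negbTE nl) mulr0 mul0r.
by rewrite !eqxx mulr1 mul1r.
Qed.

Lemma KS_sum (I : finType) (F : I -> 'I_r -> R) :
  (forall p, KS (F p)) -> KS (fun t => \sum_p F p t).
Proof.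
move=> /fin_all_exists [D hD]; exists (fun j l => \sum_p D p j l) => t.
under eq_bigr do rewrite hD.
rewrite exchange_big; apply: eq_bigr => j _.
rewrite exchange_big; apply: eq_bigr => l _.
by rewrite mulr_suml.
Qed.

Lemma koszul :
  (forall (i : 'I_r) (x : R),
      gen_ideal (prefix_gens a i) (a 0 i * x) -> gen_ideal (prefix_gens a i) x) ->
  forall s : 'I_r -> R, \sum_i a 0 i * s i = 0 -> KS s.
Proof.
move=> reg.
suff H : forall n, (n <= r)%N -> forall s : 'I_r -> R,
    (forall j : 'I_r, (n <= j)%N -> s j = 0) -> \sum_i a 0 i * s i = 0 -> KS s.
  by move=> s hs; apply: (H r) => // j; rewrite leqNgt ltn_ord.
elim=> [|n IH] hn s hz hsum.
  by apply: (KS_ext _ KS0) => t; apply: hz.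
pose io : 'I_r := Ordinal hn.
have h1 : gen_ideal (prefix_gens a io) (a 0 io * s io).
  have : a 0 io * s io = - \sum_(i | i != io) a 0 i * s i.
    by move: hsum; rewrite (bigD1 io) //= => /eqP; rewrite addr_eq0 => /eqP.
  move=> ->; apply: giN; apply: gi_sumP => i nio.
  have [lin|gen] := ltnP i n.
    rewrite mulrC; apply: giM; apply: giG; by exists i.
  have -> : s i = 0.
    apply: hz; rewrite ltn_neqAle gen andbT; apply: contra nio => /eqP e.
    by apply/eqP; apply: val_inj; rewrite /= e.
  by rewrite mulr0; apply: gi0.
have [k [c [g [Sg eg]]]] := reg io _ h1.
have [h hh] := fin_all_exists Sg.
pose s' t := s t + \sum_p c p * kos a (h p) io t.
have hneq p : h p != io.
  by apply/eqP => e; have := (hh p).1; rewrite e /= ltnn.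
have Ks' : KS s'.
  apply: (IH (ltnW hn)).
    move=> j lnj; rewrite /s'.
    have [ej|nej] := eqVneq j io.
      rewrite ej eg -big_split /=; apply: big1 => p _.
      rewrite /kos (hh p).2 eqxx eq_sym (negbTE (hneq p)) mulr0 mulr1 sub0r.
      by rewrite mulrN addrN.
    have jn : (n < j)%N.
      rewrite ltn_neqAle lnj andbT; apply: contra nej => /eqP e.
      by apply/eqP; apply: val_inj; rewrite /= e.
    rewrite hz // add0r; apply: big1 => p _; rewrite /kos (negbTE nej).
    have -> : (j == h p) = false.
      apply/negbTE/eqP => e; have := (hh p).1; rewrite -e /=.
      by move=> /(ltn_trans jn); rewrite ltnn.
    by rewrite !mulr0 subrr mulr0.
  rewrite /s'; under eq_bigr do rewrite mulrDr.
  rewrite big_split /= hsum add0r.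
  under eq_bigr do rewrite mulr_sumr.
  rewrite exchange_big /=; apply: big1 => p _.
  under eq_bigr do rewrite mulrCA.
  by rewrite -mulr_sumr kos_syz mulr0.
apply: (KS_ext (s2 := fun t => s' t + \sum_p (- c p) * kos a (h p) io t)).
  by move=> t; rewrite /s' -addrA -big_split /= big1 ?addr0 // => p _;
     rewrite mulNr addrN.
apply: KSD => //; apply: KS_sum => p; apply: KSZ; exact: KS_kos.
Qed.

End Kos.

Section Main.
Variables (R : comRingType) (r m : nat) (a : 'rV[R]_r) (B' : 'M[R]_(r, m)).
Hypothesis reg : forall (i : 'I_r) (x : R),
      gen_ideal (prefix_gens a i) (a 0 i * x) -> gen_ideal (prefix_gens a i) x.

Local Notation J' := (gen_ideal (aB_gens a B')).
Local Notation I' := (gen_ideal (gens_union (aB_gens a B') (minor_gens B'))).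

Lemma J'I' x : J' x -> I' x.
Proof. by apply: gi_mono => y hy; apply: giG; left. Qed.

Lemma main_P n0 : forall k, (k + n0 = r)%N -> forall M : 'M[R]_r,
  (forall c : 'I_r, (c < k)%N -> exists j, forall i, M i c = B' i j) ->
  (forall c : 'I_r, (k <= c)%N -> J' ((a *m M) 0 c)) -> I' (\det M).
Proof.
elim: n0 => [|n0 IH] k hk M hB hJ.
  rewrite addn0 in hk.
  have /fin_all_exists [g hg] : forall c : 'I_r, exists j, forall i, M i c = B' i j.
    by move=> c; apply: hB; rewrite hk ltn_ord.
  have -> : M = colsub g B' by apply/matrixP => i j; rewrite mxE hg.
  by apply: gi_mono (minor_any B' g) => y hy; apply: giG; right.
have hkr : (k < r)%N by rewrite -hk addnS ltnS leq_addr.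
pose ko : 'I_r := Ordinal hkr.
have [kk [c [gg [Sg eg]]]] := hJ ko (leqnn k).
have [h hh] := fin_all_exists Sg.
pose u i := \sum_t c t * B' i (h t).
pose s i := M i ko - u i.
have -> : \det M = \sum_t c t * (\sum_i B' i (h t) * cofactor M i ko)
                   + \sum_i s i * cofactor M i ko.
  rewrite (expand_det_col _ ko).
  have -> : \sum_t c t * (\sum_i B' i (h t) * cofactor M i ko) =
            \sum_i u i * cofactor M i ko.
    under eq_bigr do rewrite mulr_sumr.
    rewrite exchange_big; apply: eq_bigr => i _ /=.
    by rewrite /u mulr_suml; apply: eq_bigr => t _; rewrite mulrA.
  by rewrite -big_split; apply: eq_bigr => i _ /=; rewrite -[RHS]mulrDl /s addrC subrK.
apply: giD.
  apply: gi_sum => t; apply: giM.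
  rewrite -det_setcol.
  have hk' : (k.+1 + n0 = r)%N by rewrite addSn -addnS.
  apply: (IH _ hk').
    move=> cc lc; have [e|ne] := eqVneq cc ko.
      by exists (h t) => i; rewrite mxE e eqxx.
    have lc' : (cc < k)%N.
      rewrite ltn_neqAle -ltnS lc andbT; apply: contra ne => /eqP e.
      by apply/eqP; apply: val_inj.
    have [j hj] := hB cc lc'; exists j => i; rewrite mxE (negbTE ne) hj //.
  move=> cc lc; have ne : cc != ko.
    by apply/eqP => e; move: lc; rewrite e /= ltnn.
  have -> : (a *m setcol M ko (fun i => B' i (h t))) 0 cc = (a *m M) 0 cc.
    by rewrite !mxE; apply: eq_bigr => i _; rewrite mxE (negbTE ne).
  by apply: hJ; apply: ltnW.
have hs : \sum_i a 0 i * s i = 0.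
  rewrite /s; under eq_bigr do rewrite mulrBr.
  rewrite sumrB; apply/eqP; rewrite subr_eq0; apply/eqP.
  have -> : \sum_i a 0 i * M i ko = (a *m M) 0 ko by rewrite mxE.
  rewrite eg /u; under [RHS]eq_bigr do rewrite mulr_sumr.
  rewrite exchange_big /=; apply: eq_bigr => t _.
  rewrite (hh t) mxE mulr_sumr; apply: eq_bigr => i _; rewrite mulrCA //.
have [d hd] := koszul reg hs.
have -> : \sum_i s i * cofactor M i ko =
    \sum_j \sum_l d j l * (\sum_i kos a j l i * cofactor M i ko).
  under eq_bigr do rewrite hd mulr_suml.
  rewrite exchange_big; apply: eq_bigr => j _ /=.
  under eq_bigr do rewrite mulr_suml.
  rewrite exchange_big; apply: eq_bigr => l _ /=.
  by rewrite mulr_sumr; apply: eq_bigr => i _; rewrite mulrA.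
apply: gi_sum => j; apply: gi_sum => l; apply: giM.
apply: gi_mono (det_kos a M ko j l) => y [cc [ne ->]].
have [lc|gc] := ltnP cc k.
  have [jj hj] := hB cc lc; apply: J'I'; apply: giG; exists jj.
  by rewrite !mxE; apply: eq_bigr => i _; rewrite hj.
apply: J'I'; apply: hJ => //.
Qed.

End Main.

Lemma dir (R : comRingType) (r n m : nat) (a : 'rV[R]_r)
  (B : 'M[R]_(r, n)) (B' : 'M[R]_(r, m)) :
  regular_seq a ->
  (forall x, gen_ideal (aB_gens a B) x -> gen_ideal (aB_gens a B') x) ->
  forall x,
    gen_ideal (gens_union (aB_gens a B) (minor_gens B)) x ->
    gen_ideal (gens_union (aB_gens a B') (minor_gens B')) x.
Proof.
move=> [reg _] hJ x; apply: gi_mono => y [hy|[f [_ ->]]].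
  by apply: J'I'; apply: hJ; apply: giG.
apply: (main_P reg (n0 := r) (k := 0%N)) => // c _.
apply: hJ; apply: giG; exists (f c).
by rewrite !mxE; apply: eq_bigr => i _; rewrite mxE.
Qed.

Unset Implicit Arguments.
Theorem lemma4p4 (R : comRingType) (r n m : nat) (a : 'rV[R]_r)
  (B : 'M[R]_(r, n)) (B' : 'M[R]_(r, m)) :
  regular_seq a ->
  (forall x, gen_ideal (aB_gens a B) x <-> gen_ideal (aB_gens a B') x) ->
  forall x,
    gen_ideal (gens_union (aB_gens a B) (minor_gens B)) x <->
    gen_ideal (gens_union (aB_gens a B') (minor_gens B')) x.
Proof.
move=> hr hJ x; split; apply: dir => // y; by case: (hJ y).
Qed.
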